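(* Let $\eta>0$, let $\mathcal{I},\mathcal{J},\mathcal{K}$ be finite index sets with cluster trees $\mathcal{T}_{\mathcal{I}},\mathcal{T}_{\mathcal{J}},\mathcal{T}_{\mathcal{K}}$, where every cluster $c$ is associated with a nonempty bounded set $\Omega_c\subseteq\mathbb{R}^d$, and let $\mathcal{T}_{\mathcal{I}\times\mathcal{J}}$ and $\mathcal{T}_{\mathcal{J}\times\mathcal{K}}$ be block trees constructed by the admissibility-based procedure described in the context (so that every non-leaf block is not admissible). Let $t\in\mathcal{T}_{\mathcal{I}}$ and $r\in\mathcal{T}_{\mathcal{K}}$, and let $\mathcal{P}_{tr}$ be the set of subdivided products of the accumulator for $(t,r)$, as defined in the context. If $\mathcal{P}_{tr}$ is not empty, then there is a cluster $s\in\mathcal{T}_{\mathcal{J}}$ with $(t,s)\in\mathcal{T}_{\mathcal{I}\times\mathcal{J}}\setminus\mathcal{L}_{\mathcal{I}\times\mathcal{J}}$ and $(s,r)\in\mathcal{T}_{\mathcal{J}\times\mathcal{K}}\setminus\mathcal{L}_{\mathcal{J}\times\mathcal{K}}$ such that \[ \frac{\eta}{\eta+1}\operatorname{dist}(\Omega_t,\Omega_r) < \max\{\operatorname{diam}(\Omega_t),\operatorname{diam}(\Omega_s),\operatorname{diam}(\Omega_r)\}. \]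
   Context: A cluster tree $\mathcal{T}_{\mathcal{I}}$ for a finite index set $\mathcal{I}$ is a finite tree whose nodes (clusters) $t$ are labeled by subsets $\hat t\subseteq\mathcal{I}$, the root labeled $\mathcal{I}$, such that the labels of the children of a non-leaf node form a disjoint partition of its label. Each cluster $t$ has an associated nonempty bounded set $\Omega_t\subseteq\mathbb{R}^d$ (with $\Omega_{t'}\subseteq\Omega_t$ for children $t'$). A pair of clusters $(t,s)$ is called admissible if $\max\{\operatorname{diam}(\Omega_t),\operatorname{diam}(\Omega_s)\}\le 2\eta\operatorname{dist}(\Omega_t,\Omega_s)$. The block tree $\mathcal{T}_{\mathcal{I}\times\mathcal{J}}$ for cluster trees $\mathcal{T}_{\mathcal{I}},\mathcal{T}_{\mathcal{J}}$ is built recursively starting from the pair of roots: a block $(t,s)$ is kept as a leaf if it is admissible; otherwise, if $t$ or $s$ has children, its children are $\{t\}\times\operatorname{chil}(s)$ if $t$ is a leaf, $\operatorname{chil}(t)\times\{s\}$ if $s$ is a leaf, and $\operatorname{chil}(t)\times\operatorname{chil}(s)$ otherwise, and these are treated recursively; if neither has children, $(t,s)$ is an inadmissible leaf. $\mathcal{L}_{\mathcal{I}\times\mathcal{J}}$ denotes the set of leaves, split into admissible leaves $\mathcal{L}^+_{\mathcal{I}\times\mathcal{J}}$ and inadmissible leaves $\mathcal{L}^-_{\mathcal{I}\times\mathcal{J}}$; analogously for $\mathcal{T}_{\mathcal{J}\times\mathcal{K}}$. Given matrices $X\in\mathbb{R}^{\mathcal{I}\times\mathcal{J}}$, $Y\in\mathbb{R}^{\mathcal{J}\times\mathcal{K}}$,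 an accumulator for $(t,r)$ collects products $X|_{\hat t\times\hat s}Y|_{\hat s\times\hat r}$ with $(t,s)\in\mathcal{T}_{\mathcal{I}\times\mathcal{J}}$, $(s,r)\in\mathcal{T}_{\mathcal{J}\times\mathcal{K}}$; such a product is stored as a triple $(s,X|_{\hat t\times\hat s},Y|_{\hat s\times\hat r})$ in the set $\mathcal{P}_{tr}$ (''subdivided products'') only if neither $(t,s)\in\mathcal{L}_{\mathcal{I}\times\mathcal{J}}$ nor $(s,r)\in\mathcal{L}_{\mathcal{J}\times\mathcal{K}}$ (products with an admissible or inadmissible leaf block are stored in other components of the accumulator). Starting from the accumulator of the root pair containing the full product, accumulators for children $(t',r')$ are obtained by splitting, where each triple $(s,\cdot,\cdot)\in\mathcal{P}_{tr}$ contributes the sub-products for $s'\in\operatorname{chil}(s)$ with the same storage rule. *)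

(* Defs.v *)
From HB Require Import structures.
From mathcomp Require Import all_boot all_order all_algebra.
From mathcomp Require Import boolp classical_sets reals.

Set Implicit Arguments.
Unset Strict Implicit.
Unset Printing Implicit Defensive.

Import Order.TTheory GRing.Theory Num.Theory.
Local Open Scope ring_scope.


Section ClusterTrees.
Variables (R : realType) (d : nat).

Definition edist (x y : 'rV[R]_d) : R :=
  Num.sqrt (\sum_(i < d) (x ord0 i - y ord0 i) ^+ 2).

Definition diam (A : set 'rV[R]_d) : R :=
  sup [set e | exists x y, A x /\ A y /\ e = edist x y].
Definition dist (A B : set 'rV[R]_d) : R :=
  inf [set e | exists x y, A x /\ B y /\ e = edist x y].

Definition bounded_set (A : set 'rV[R]_d) : Prop :=
  exists M : R, forall x, A x -> edist x 0 <= M.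

(* Data of a cluster tree over the finite index set I: a finite type of
   nodes (clusters), a root, children lists, index labels \hat t and
   associated sets Omega_t. *)
Record cluster_tree (I : finType) := ClusterTree {
  ct_node :> finType;
  ct_root : ct_node;
  ct_chil : ct_node -> seq ct_node;
  ct_lab  : ct_node -> {set I};
  ct_dom  : ct_node -> set 'rV[R]_d }.

Definition is_cluster_tree (I : finType) (T : cluster_tree I) : Prop :=
  (forall t : T, uniq (ct_chil t)) /\
      (forall t t' s : T, s \in ct_chil t -> s \in ct_chil t' -> t = t') /\
      (forall t : T, ct_root T \notin ct_chil t) /\
      (forall t : T, connect (fun a b : T => b \in ct_chil a) (ct_root T) t) /\
      ct_lab (ct_root T) = finset.setTfor I /\
      (forall t : T, ct_chil t != [::] ->
         ct_lab t = \bigcup_(s <- ct_chil t) ct_lab s /\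
         (forall s1 s2, s1 \in ct_chil t -> s2 \in ct_chil t -> s1 != s2 ->
            [disjoint ct_lab s1 & ct_lab s2])) /\
      (forall t s : T, s \in ct_chil t -> (ct_dom s `<=` ct_dom t)%classic) /\
      (forall t : T, (exists x, ct_dom t x) /\ bounded_set (ct_dom t)).

Variables (I J : finType) (T1 : cluster_tree I) (T2 : cluster_tree J).

Definition admissible (eta : R) (t : T1) (s : T2) : Prop :=
  Num.max (diam (ct_dom t)) (diam (ct_dom s))
    <= 2 * eta * dist (ct_dom t) (ct_dom s).

Definition pair_chil (t : T1) (s : T2) : seq (T1 * T2) :=
  if ct_chil t == [::] then [seq (t, s') | s' <- ct_chil s]
  else if ct_chil s == [::] then [seq (t', s) | t' <- ct_chil t]
  else [seq (t', s') | t' <- ct_chil t, s' <- ct_chil s].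

Inductive in_btree (eta : R) : T1 -> T2 -> Prop :=
| bt_root : in_btree eta (ct_root T1) (ct_root T2)
| bt_child t s t' s' : in_btree eta t s -> ~ admissible eta t s ->
    (t', s') \in pair_chil t s -> in_btree eta t' s'.

Definition bleaf (eta : R) (t : T1) (s : T2) : Prop :=
  admissible eta t s \/ (ct_chil t = [::] /\ ct_chil s = [::]).

Definition inner_block (eta : R) (t : T1) (s : T2) : Prop :=
  in_btree eta t s /\ ~ bleaf eta t s.

End ClusterTrees.

Definition sons (R : realType) (d : nat) (I : finType)
  (T : cluster_tree R d I) (s : T) : seq T :=
  if ct_chil s == [::] then [:: s] else ct_chil s.

(* Subdivided products P_{tr}: s is such that the triple
   (s, X|_{t x s}, Y|_{s x r}) belongs to P_{tr}.  The matrix components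
   are determined by (t,s,r) and therefore omitted. *)
Section Accumulator.
Variables (R : realType) (d : nat) (I J K : finType)
  (TI : cluster_tree R d I) (TJ : cluster_tree R d J)
  (TK : cluster_tree R d K) (eta : R).

Inductive subdivided : TI -> TK -> TJ -> Prop :=
| sp_root :
    inner_block eta (ct_root TI) (ct_root TJ) ->
    inner_block eta (ct_root TJ) (ct_root TK) ->
    subdivided (ct_root TI) (ct_root TK) (ct_root TJ)
| sp_split t r s t' r' s' :
    subdivided t r s ->
    (t', r') \in pair_chil t r ->
    s' \in sons s ->
    inner_block eta t' s' ->
    inner_block eta s' r' ->
    subdivided t' r' s'.

End Accumulator.

(* Main.v *)
Require Import Defs.
From HB Require Import structures.
From mathcomp Require Import all_boot all_order all_algebra.
From mathcomp Require Import boolp classical_sets reals.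
From mathcomp Require Import ring lra.
Import Order.TTheory GRing.Theory Num.Theory.
Set Implicit Arguments.
Unset Strict Implicit.
Local Open Scope ring_scope.

Section H.
Variables (R : realType) (d : nat).

Lemma cs_sq (a b : 'I_d -> R) :
  (\sum_i a i * b i) ^+ 2 <= (\sum_i a i ^+ 2) * (\sum_i b i ^+ 2).
Proof.
have E : \sum_i \sum_j (a i * b j - a j * b i) ^+ 2 =
  2 * ((\sum_i a i ^+ 2) * (\sum_i b i ^+ 2) - (\sum_i a i * b i) ^+ 2).
  have E1 : forall i j, (a i * b j - a j * b i) ^+ 2 =
     a i ^+ 2 * b j ^+ 2 + b i ^+ 2 * a j ^+ 2 - 2 * ((a i * b i) * (a j * b j)).
    by move=> i j; ring.
  under eq_bigr do under eq_bigr do rewrite E1.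
  under eq_bigr do rewrite sumrB big_split /= -!mulr_sumr.

  rewrite sumrB big_split /= -!mulr_suml -mulr_sumr -mulr_suml.
  ring.
have : 0 <= \sum_i \sum_j (a i * b j - a j * b i) ^+ 2.
  by apply: sumr_ge0 => i _; apply: sumr_ge0 => j _; exact: sqr_ge0.
rewrite E; lra.
Qed.

Lemma mink (a b : 'I_d -> R) :
  Num.sqrt (\sum_i (a i + b i) ^+ 2) <=
  Num.sqrt (\sum_i a i ^+ 2) + Num.sqrt (\sum_i b i ^+ 2).
Proof.
set A := \sum_i a i ^+ 2; set B := \sum_i b i ^+ 2; set S := \sum_i a i * b i.
have hA : 0 <= A by apply: sumr_ge0 => i _; exact: sqr_ge0.
have hB : 0 <= B by apply: sumr_ge0 => i _; exact: sqr_ge0.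
have hS : S <= Num.sqrt A * Num.sqrt B.
  rewrite -sqrtrM //.
  apply: le_trans (ler_norm S) _.
  rewrite -sqrtr_sqr ler_sqrt; last by rewrite mulr_ge0.
  exact: cs_sq.
have EC : \sum_i (a i + b i) ^+ 2 = A + B + 2 * S.
  have E1 : forall i, (a i + b i) ^+ 2 = a i ^+ 2 + b i ^+ 2 + 2 * (a i * b i).
    by move=> i; ring.
  under eq_bigr do rewrite E1.
  by rewrite !big_split /= -mulr_sumr.
rewrite EC -[X in _ <= X]ger0_norm; last by rewrite addr_ge0 ?sqrtr_ge0.
rewrite -sqrtr_sqr ler_sqrt; last exact: sqr_ge0.
have := sqr_sqrtr hA; have := sqr_sqrtr hB.
have := sqrtr_ge0 A; have := sqrtr_ge0 B.
move: hS; set sa := Num.sqrt A; set sb := Num.sqrt B => hS _ _ HB HA.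
rewrite -{1}HA -{1}HB; nra.
Qed.

Lemma edist_ge0 (x y : 'rV[R]_d) : 0 <= edist x y.
Proof. exact: sqrtr_ge0. Qed.

Lemma edist_sym (x y : 'rV[R]_d) : edist x y = edist y x.
Proof.
rewrite /edist; congr Num.sqrt; apply: eq_bigr => i _; ring.
Qed.

Lemma edist_tri (x y z : 'rV[R]_d) : edist x z <= edist x y + edist y z.
Proof.
rewrite /edist.
have := mink (fun i => x ord0 i - y ord0 i) (fun i => y ord0 i - z ord0 i).
congr (_ <= _); congr Num.sqrt; apply: eq_bigr => i _; ring.
Qed.

Lemma diam_ub (A : set 'rV[R]_d) x y : bounded_set A -> A x -> A y ->
  edist x y <= diam A.
Proof.
move=> [M hM] Ax Ay.
have hub : has_ubound [set e | exists x y, A x /\ A y /\ e = edist x y].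
  exists (M + M) => e [u [v [Au [Av ->]]]].
  apply: le_trans (edist_tri u 0 v) _.
  by rewrite (edist_sym 0 v); apply: lerD; apply: hM.
by apply: (ub_le_sup hub); exists x, y.
Qed.

Lemma dist_lb (A B : set 'rV[R]_d) x y : A x -> B y -> dist A B <= edist x y.
Proof.
move=> Ax By.
have hlb : has_lbound [set e | exists x y, A x /\ B y /\ e = edist x y].
  by exists 0 => e [u [v [_ [_ ->]]]]; exact: edist_ge0.
by apply: (ge_inf hlb); exists x, y.
Qed.

Lemma dist_adh (A B : set 'rV[R]_d) e : (exists x, A x) -> (exists y, B y) ->
  0 < e -> exists x y, A x /\ B y /\ edist x y < dist A B + e.
Proof.
move=> [x Ax] [y By] e0.
have hi : has_inf [set e | exists x y, A x /\ B y /\ e = edist x y].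
  split; first by exists (edist x y), x, y.
  by exists 0 => e' [u [v [_ [_ ->]]]]; exact: edist_ge0.
have [e' [u [v [Au [Bv ->]]]] H] := inf_adherent e0 hi.
by exists u, v.
Qed.

Lemma dist_tri (A B C : set 'rV[R]_d) : (exists x, A x) -> (exists y, B y) ->
  (exists z, C z) -> bounded_set B ->
  dist A C <= dist A B + diam B + dist B C.
Proof.
move=> nA nB nC bB; apply/ler_addgt0Pr => e e0.
have e20 : 0 < e / 2 by rewrite divr_gt0.
have [x [y [Ax [By H1]]]] := dist_adh nA nB e20.
have [y' [z [By' [Cz H2]]]] := dist_adh nB nC e20.
have H3 := dist_lb Ax Cz.
have H4 := edist_tri x y z.
have H5 := edist_tri y y' z.
have H6 := diam_ub bB By By'.
lra.
Qed.
End H.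

Lemma ct_dom_ok (R : realType) (d : nat) (I : finType) (T : cluster_tree R d I) :
  is_cluster_tree T -> forall t : T, (exists x, ct_dom t x) /\ bounded_set (ct_dom t).
Proof. by case=> _ [_ [_ [_ [_ [_ [_ H]]]]]]. Qed.

Theorem lemma3p1 (R : realType) (d : nat) (I J K : finType)
  (TI : cluster_tree R d I) (TJ : cluster_tree R d J)
  (TK : cluster_tree R d K)
  (hTI : is_cluster_tree TI) (hTJ : is_cluster_tree TJ)
  (hTK : is_cluster_tree TK)
  (eta : R) (heta : 0 < eta) (t : TI) (r : TK) :
  (exists s : TJ, subdivided eta t r s) ->
  exists s : TJ,
    inner_block eta t s /\ inner_block eta s r /\
    eta / (eta + 1) * dist (ct_dom t) (ct_dom r)
      < Num.max (diam (ct_dom t)) (Num.max (diam (ct_dom s)) (diam (ct_dom r))).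
Proof.
move=> [s Hs].
have [H1 H2] : inner_block eta t s /\ inner_block eta s r.
  by case: Hs => [//|? ? ? ? ? ? _ _ _ ? ?]; split.
exists s; split => //; split => //.
have [[_ nA1] [_ nA2]] := (H1, H2).
have nad1 : ~ admissible eta t s by move=> h; apply: nA1; left.
have nad2 : ~ admissible eta s r by move=> h; apply: nA2; left.
have L1 : 2 * eta * dist (ct_dom t) (ct_dom s) < Num.max (diam (ct_dom t)) (diam (ct_dom s)).
  by rewrite ltNge; apply/negP.
have L2 : 2 * eta * dist (ct_dom s) (ct_dom r) < Num.max (diam (ct_dom s)) (diam (ct_dom r)).
  by rewrite ltNge; apply/negP.
have [nt bt] := ct_dom_ok hTI t.
have [ns bs] := ct_dom_ok hTJ s.
have [nr br] := ct_dom_ok hTK r.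
have T3 := dist_tri nt ns nr bs.
move: L1 L2 T3.
set Dt := diam (ct_dom t); set Ds := diam (ct_dom s); set Dr := diam (ct_dom r).
set a := dist _ _; set b := dist _ _; set c := dist _ _.
set M := Num.max Dt (Num.max Ds Dr).
have M1 : Num.max Dt Ds <= M by rewrite !(ge_max, le_max, lexx) ?orbT ?andbT.
have M2 : Num.max Ds Dr <= M by rewrite !(ge_max, le_max, lexx) ?orbT ?andbT.
have M3 : Ds <= M by rewrite !(ge_max, le_max, lexx) ?orbT ?andbT.
move=> L1 L2 T3.
have HK : eta * c < M * (eta + 1) by nra.
rewrite mulrAC ltr_pdivrMr //; lra.
Qed.
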